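(* Let $\widetilde{\mathbb{F}}$ be a field of characteristic $p>2$, let $q=p^\ell$ with $\ell\geq 1$, and let $f:\mathbb{F}_q\to\widetilde{\mathbb{F}}$ be an SD-map. Then $f$ is a field isomorphism of $\mathbb{F}_q$ onto a copy of $\mathbb{F}_q$ (i.e.\ a field automorphism of $\mathbb{F}_q$ up to this identification), except when $q=p=5$, in which case $f$ may alternatively be (and can only otherwise be) the map $w\mapsto w^3$, where $\mathbb{F}_5$ is identified with the prime subfield of $\widetilde{\mathbb{F}}$.
   Context: $\mathbb{F}_q$ is the finite field with $q$ elements. A map $f:\mathbb{F}\to\widetilde{\mathbb{F}}$ between fields is called an SD-map if for all $x\neq y$ in $\mathbb{F}$ one has $f(x)\neq f(y)$ and \[ f\left(\frac{x+y}{x-y}\right)=\frac{f(x)+f(y)}{f(x)-f(y)}. \] *)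

(* Defs.v *)
From HB Require Import structures.
From mathcomp Require Import all_boot all_order all_algebra all_field.
Set Implicit Arguments. Unset Strict Implicit. Unset Printing Implicit Defensive.
Import GRing.Theory.
Local Open Scope ring_scope.

Definition SD_map (F K : fieldType) (f : F -> K) : Prop :=
  forall x y : F, x != y ->
    f x != f y /\ f ((x + y) / (x - y)) = (f x + f y) / (f x - f y).

(* Main.v *)
Require Import Defs.
From HB Require Import structures.
From mathcomp Require Import all_boot all_order all_algebra all_field.
From mathcomp Require Import ring zify cyclic.
Set Implicit Arguments. Unset Strict Implicit. Unset Printing Implicit Defensive.
Import GRing.Theory.
Local Open Scope ring_scope.

Section Core.
Variable F : finFieldType.
Hypothesis two_nz : (2%:R : F) != 0.
Hypothesis oddq : odd #|F|.
Variable k : nat.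
Hypothesis k_gt0 : (0 < k)%N.
Hypothesis k_lt : (k < #|F|.-1)%N.
Hypothesis kinj : injective (fun x : F => x ^+ k).
Hypothesis H : forall x : F, (x + 1) ^+ k * (x ^+ k - 1) = (x - 1) ^+ k * (x ^+ k + 1).

Lemma k_odd : odd k.
Proof.
apply/negPn/negP => ev.
have : (-1 : F) ^+ k = 1 ^+ k by rewrite expr1n -signr_odd (negbTE ev) expr0.
move/kinj => h.
by move: two_nz; rewrite mulr2n -{2}h subrr eqxx.
Qed.

Lemma allroots (p : {poly F}) : (forall x, p.[x] = 0) -> (size p <= #|F|)%N -> p = 0.
Proof.
move=> r sz; apply: (@roots_geq_poly_eq0 _ p (enum F)).
- by apply/allP => x _; apply/eqP/r.
- exact: enum_uniq.
- by rewrite -cardE.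
Qed.


Definition Ek (i : nat) : F := 'C(k, i)%:R - (i == 0%N)%:R.
Definition Dk : {poly F} := \poly_(i < k) Ek i.
Definition DNk : {poly F} := \poly_(i < k) ((-1) ^+ i * Ek i).

Lemma Dk_horner x : Dk.[x] = (x + 1) ^+ k - x ^+ k - 1.
Proof.
rewrite /Dk horner_poly exprD1n big_ord_recr /= binn mulr1n.
rewrite /Ek; under eq_bigr do rewrite mulrBl.
rewrite sumrB; congr (_ - _); last first.
  case: k k_gt0 => // k' _; rewrite big_ord_recl /= mul1r expr0 big1 ?addr0 //.
  by move=> i _; rewrite mul0r.
rewrite addrK; apply: eq_bigr => i _; by rewrite mulr_natl.
Qed.

Lemma DNk_horner x : DNk.[x] = Dk.[- x].
Proof.
rewrite /DNk /Dk !horner_poly; apply: eq_bigr => i _.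
by rewrite [(- x) ^+ _]exprNn; ring.
Qed.

Lemma size_XnB1 : size ('X^k - 1 : {poly F}) = k.+1.
Proof. by rewrite -polyC1 size_XnsubC. Qed.
Lemma size_XnD1 : size ('X^k + 1 : {poly F}) = k.+1.
Proof. by rewrite -polyC1 size_XnaddC. Qed.

Lemma caseA : (2 * k <= #|F|)%N -> forall x : F, (x + 1) ^+ k = x ^+ k + 1.
Proof.
move=> le2k.
pose Q := Dk * ('X^k - 1) + DNk * ('X^k + 1).
have Qx x : Q.[x] = 0.
  rewrite /Q !hornerE DNk_horner !Dk_horner.
  have ko := k_odd.
  have -> : (- x + 1) ^+ k = - (x - 1) ^+ k.
    rewrite (_ : - x + 1 = - (x - 1)); last by rewrite opprB addrC.
    by rewrite exprNn -signr_odd ko expr1 mulN1r.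
  have -> : (- x) ^+ k = - x ^+ k.
    by rewrite exprNn -signr_odd ko expr1 mulN1r.
  set a := (x + 1) ^+ k; set b := (x - 1) ^+ k; set y := x ^+ k.
  have -> : (a - y - 1) * (y - 1) + (- b - - y - 1) * (y + 1)
          = a * (y - 1) - b * (y + 1) by ring.
  by rewrite /a /b /y H subrr.
have szQ : (size Q <= #|F|)%N.
  apply: leq_trans (size_polyD _ _) _; rewrite geq_max; apply/andP; split.
    apply: leq_trans (size_mul_leq _ _) _; rewrite size_XnB1 addnS /=.
    by apply: leq_trans le2k; rewrite mul2n -addnn leq_add2r size_poly.
  apply: leq_trans (size_mul_leq _ _) _; rewrite size_XnD1 addnS /=.
  by apply: leq_trans le2k; rewrite mul2n -addnn leq_add2r size_poly.
have Q0 : Q = 0 by apply: allroots.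
have eQ : Dk * ('X^k - 1) = (- DNk) * ('X^k + 1).
  by apply/eqP; rewrite mulNr -addr_eq0; apply/eqP.
have cop : coprimep ('X^k + 1 : {poly F}) ('X^k - 1).
  apply/Bezout_coprimepP; exists ((2%:R^-1)%:P, - (2%:R^-1)%:P) => /=.
  have -> : (2%:R^-1)%:P * ('X^k + 1) + - (2%:R^-1)%:P * ('X^k - 1)
          = (2%:R^-1 : F)%:P * (1 + 1) by ring.
  by rewrite -polyC1 -polyCD -polyCM -mulr2n mulVf // eqpxx.
have dv : ('X^k + 1) %| Dk.
  by rewrite -(Gauss_dvdpl _ cop) eQ dvdp_mull.
have D0 : Dk = 0.
  apply/eqP; apply: contraT => nz.
  have := dvdp_leq nz dv; rewrite size_XnD1 => h.
  by have := leq_trans h (size_poly _ _); rewrite ltnn.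
move=> x; have := Dk_horner x; rewrite D0 horner0 => /esym/eqP.
by rewrite subr_eq0 subr_eq => /eqP ->; rewrite addrC.
Qed.


Lemma unit_pow (x : F) : x != 0 -> x ^+ #|F|.-1 = 1.
Proof.
move=> nz; have := expf_card x.
have q0 : (0 < #|F|)%N by apply/card_gt0P; exists x.
rewrite -{1}(prednK q0) exprS => h.
by apply: (mulfI nz); rewrite mulr1 h.
Qed.

Lemma size_XaddC_exp (c : F) n : size (('X + c%:P) ^+ n) = n.+1.
Proof. by rewrite -[c]opprK polyCN size_exp_XsubC. Qed.

Lemma monic_XaddC_exp (c : F) n : ('X + c%:P) ^+ n \is monic.
Proof. by apply: monic_exp; apply: monicXaddC. Qed.

Lemma pm1 (x : F) : x != 0 -> x ^+ (#|F|.-1)./2 = 1 \/ x ^+ (#|F|.-1)./2 = -1.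
Proof.
move=> nz; have := unit_pow nz.
rewrite -{1}(odd_double_half #|F|.-1).
have -> : odd #|F|.-1 = false.
  by move: oddq; case: #|F| => //= n /negbTE.
rewrite add0n -mul2n mulnC exprM expr2 => h.
set y := x ^+ _ in h *.
have : (y - 1) * (y + 1) = 0.
  have e : (y - 1) * (y + 1) = y * y - 1 by ring.
  by rewrite e h subrr.
move/eqP; rewrite mulf_eq0 subr_eq0 addr_eq0.
by case/orP => /eqP; [left | right].
Qed.

Lemma caseB : (#|F| < 2 * k)%N -> #|F| = 5%N /\ k = 3%N.
Proof.
move=> lt2k.
set q := #|F|.
set k' := (q.-1 - k)%N.
have kk' : (k' + k = q.-1)%N by rewrite /k' subnK // ltnW.
have k'_gt0 : (0 < k')%N by rewrite /k' subn_gt0.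
pose A := ('X + 1) ^+ k' * ('X^k' + 1) : {poly F}.
pose B := ('X - 1) ^+ k' * ('X^k' - 1) : {poly F}.
pose P := A + B.
have monA : A \is monic.
  by rewrite /A monicMl -?polyC1 ?monic_XaddC_exp ?monicXnaddC.
have monB : B \is monic.
  by rewrite /B monicMl -?polyC1 ?monic_exp ?monicXsubC ?monicXnsubC.
have szA : size A = (2 * k').+1.
  rewrite /A size_monicM -?polyC1 ?monic_XaddC_exp ?size_XaddC_exp ?size_XnaddC //.
    by rewrite addSn /=; lia.
  by rewrite -size_poly_eq0 size_XnaddC.
have szB : size B = (2 * k').+1.
  rewrite /B size_monicM -?polyC1 ?monic_exp ?monicXsubC ?size_exp_XsubC ?size_XnsubC //.
    by rewrite addSn /=; lia.
  by rewrite -size_poly_eq0 size_XnsubC.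
have cP : P`_(2 * k') = 2%:R.
  rewrite coefD.
  have := monicP monA; have := monicP monB.
  by rewrite !lead_coefE szA szB /= => -> ->.
have Pnz : P != 0.
  by apply/eqP => P0; move: two_nz; rewrite -cP P0 coef0 eqxx.
have szP : (size P <= (2 * k').+1)%N.
  by apply: leq_trans (size_polyD _ _) _; rewrite szA szB maxnn.
pose S := [pred x : F | (x != 0) && (x != 1) && (x != -1)].
have rootP : all (root P) (enum S).
  apply/allP => x; rewrite mem_enum inE => /andP[/andP[x0 x1] xm1].
  have a0 : x + 1 != 0 by rewrite addr_eq0.
  have b0 : x - 1 != 0 by rewrite subr_eq0.
  have e1 : (x + 1) ^+ k' * (x + 1) ^+ k = 1 by rewrite -exprD kk' unit_pow.
  have e2 : (x - 1) ^+ k' * (x - 1) ^+ k = 1 by rewrite -exprD kk' unit_pow.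
  have e3 : x ^+ k' * x ^+ k = 1 by rewrite -exprD kk' unit_pow.
  have nz : (x + 1) ^+ k * (x - 1) ^+ k * x ^+ k != 0.
    by rewrite !mulf_neq0 // expf_neq0.
  rewrite rootE; suff : P.[x] * ((x + 1) ^+ k * (x - 1) ^+ k * x ^+ k) = 0.
    by move/eqP; rewrite mulf_eq0 (negbTE nz) orbF.
  have -> : P.[x] = (x + 1) ^+ k' * (x ^+ k' + 1) + (x - 1) ^+ k' * (x ^+ k' - 1).
    by rewrite /P /A /B !hornerE.
  have -> : ((x + 1) ^+ k' * (x ^+ k' + 1) + (x - 1) ^+ k' * (x ^+ k' - 1)) *
      ((x + 1) ^+ k * (x - 1) ^+ k * x ^+ k) =
      ((x + 1) ^+ k' * (x + 1) ^+ k) * (x - 1) ^+ k * (x ^+ k' * x ^+ k + x ^+ k)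
      + ((x - 1) ^+ k' * (x - 1) ^+ k) * (x + 1) ^+ k * (x ^+ k' * x ^+ k - x ^+ k)
    by ring.
  rewrite e1 e2 e3.
  have -> : 1 * (x - 1) ^+ k * (1 + x ^+ k) + 1 * (x + 1) ^+ k * (1 - x ^+ k)
      = (x - 1) ^+ k * (x ^+ k + 1) - (x + 1) ^+ k * (x ^+ k - 1) by ring.
  by rewrite H subrr.
have cardS : (q - 3 <= #|S|)%N.
  have := cardC S; rewrite -/q => <-.
  suff h3 : (#|[predC S]| <= 3)%N by rewrite leq_subLR addnC leq_add2r.
  apply: leq_trans (card_size [:: 0; 1; -1]).
  apply: subset_leq_card; apply/subsetP => x; rewrite !inE.
  by rewrite -!negb_or negbK -!orbA.
have := max_poly_roots Pnz rootP (enum_uniq _).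
rewrite -cardE => ltS.
have qk : (q = 2 * k - 1)%N.
  have h1 := leq_trans ltS szP.
  move: kk'; rewrite -subn1 => kk'.
  move: h1 cardS lt2k kk'; rewrite -/q; move: k'_gt0 k_gt0 #|S| => ? ? a; lia.
have [s es] : {s | (#|F|.-1)./2 = s} by exists ((#|F|.-1)./2).
have ks : k = s.+1.
  have e : (q.-1 = (k.-1).*2)%N.
    rewrite qk; case: k k_gt0 => // n _; rewrite -mul2n; lia.
  by rewrite -es -/q e doubleK; case: k k_gt0.
have pm (x : F) : x != 0 -> x ^+ s = 1 \/ x ^+ s = -1.
  move=> x0; rewrite -es; exact: pm1.
have two_x (x : F) : 2%:R * x = 0 -> x = 0.
  by move/eqP; rewrite mulf_eq0 (negbTE two_nz) => /eqP.
have sq : forall x : F, x != 0 -> x != 1 -> x != -1 -> x ^+ s = -1 -> x ^+ 2 = -1.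
  move=> x x0 x1 xm1 xs.
  have a0 : x + 1 != 0 by rewrite addr_eq0.
  have b0 : x - 1 != 0 by rewrite subr_eq0.
  have Hx := H x; rewrite ks !exprS xs in Hx.
  case: (pm _ a0) => ea; case: (pm _ b0) => eb; rewrite ea eb in Hx.
  - have e : (x + 1) * 1 * (x * -1 - 1) - (x - 1) * 1 * (x * -1 + 1)
        = 2%:R * (2%:R * - x) by ring.
    by move: e; rewrite Hx subrr => /esym/two_x/two_x/eqP; rewrite oppr_eq0 (negbTE x0).
  - have e : (x + 1) * 1 * (x * -1 - 1) - (x - 1) * -1 * (x * -1 + 1)
        = 2%:R * (- (x ^+ 2 + 1)) by ring.
    move: e; rewrite Hx subrr => /esym/two_x/eqP; rewrite oppr_eq0 addr_eq0.
    by move/eqP.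
  - have e : (x + 1) * -1 * (x * -1 - 1) - (x - 1) * 1 * (x * -1 + 1)
        = 2%:R * (x ^+ 2 + 1) by ring.
    move: e; rewrite Hx subrr => /esym/two_x/eqP; rewrite addr_eq0.
    by move/eqP.
  - have e : (x + 1) * -1 * (x * -1 - 1) - (x - 1) * -1 * (x * -1 + 1)
        = 2%:R * (2%:R * x) by ring.
    by move: e; rewrite Hx subrr => /esym/two_x/two_x/eqP; rewrite (negbTE x0).
have q3 : (3 <= q)%N by move: k_lt k_gt0; rewrite /q; lia.
have s_gt0 : (0 < s)%N by move: qk q3; rewrite ks; lia.
pose W : {poly F} := ('X^s - 1) * ('X^2 + 1) * ('X + 1).
have monW : W \is monic.
  by rewrite /W !monicMr -?polyC1 ?monicXnsubC ?monicXnaddC ?monicXaddC.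
have Wnz : W != 0 by apply: monic_neq0.
have szW : (size W <= s + 4)%N.
  apply: leq_trans (size_mul_leq _ _) _.
  rewrite -polyC1 size_XaddC.
  have := size_mul_leq ('X^s - 1%:P) ('X^2 + 1%:P : {poly F}).
  rewrite size_XnsubC // size_XnaddC //; move: (size _) => n; rewrite addn2 addn3 /=; lia.
have rootW : all (root W) (enum (predC1 (0 : F))).
  apply/allP => x; rewrite mem_enum inE => x0.
  rewrite rootE /W !hornerE.
  case: (pm _ x0) => xs; first by rewrite xs subrr !mul0r.
  have [->|xm1] := eqVneq x (-1); first by rewrite addNr mulr0.
  have [x1|x1] := eqVneq x 1.
    move: xs; rewrite x1 expr1n => /eqP; rewrite -subr_eq0 opprK -mulr2n.
    by rewrite (negbTE two_nz).
  by rewrite (sq x x0 x1 xm1 xs) addNr mulr0 mul0r.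
have := max_poly_roots Wnz rootW (enum_uniq _).
rewrite -cardE cardC1 -/q => ltW.
have ko := k_odd; rewrite ks /= in ko.
have hs : (s <= 3)%N by move: (leq_trans ltW szW) qk; rewrite ks; lia.
have s2 : s = 2%N.
  by move: hs ko s_gt0; case: (s) => [|[|[|[|n]]]].
by split; [rewrite qk ks s2 | rewrite ks s2].
Qed.

Lemma core : (forall x : F, (x + 1) ^+ k = x ^+ k + 1) \/ (#|F| = 5%N /\ k = 3%N).
Proof.
case: (leqP (2 * k) #|F|) => h; first by left; apply: caseA.
by right; apply: caseB.
Qed.

End Core.
Section SDprops.
Variables (F K : fieldType) (f : F -> K).
Hypothesis sd : SD_map f.
Hypothesis two_F : (2%:R : F) != 0.
Hypothesis two_K : (2%:R : K) != 0.

Lemma sd_neq x y : x != y -> f x != f y.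
Proof. by case/sd. Qed.

Lemma sd_inj : injective f.
Proof.
move=> x y e; apply/eqP; apply: contraT => nxy.
by move: (sd_neq nxy); rewrite e eqxx.
Qed.

Lemma one_neqN1 : (1 : F) != -1.
Proof.
apply: contra two_F => /eqP e.
by rewrite mulr2n {1}e addNr.
Qed.

Lemma sd_f0 : f 0 = 0.
Proof.
have n10 : (1 : F) != 0 := oner_neq0 _.
have nm10 : (-1 : F) != 0 by rewrite oppr_eq0.
have [d1 h1] := sd n10.
have [d2 h2] := sd nm10.
have d3 := sd_neq one_neqN1.
rewrite addr0 subr0 divff // in h1.
rewrite addr0 subr0 divff // in h2.
set a := f 1 in h1 h2 d1 d3; set b := f (-1) in h2 d2 d3; set c := f 0 in h1 h2 d1 d2 *.
have e : (a + c) / (a - c) = (b + c) / (b - c) by rewrite -h1 -h2.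
move/eqP: e; rewrite eqr_div ?subr_eq0 // => /eqP e.
have : 2%:R * c * (a - b) = 0.
  have -> : 2%:R * c * (a - b) = (b + c) * (a - c) - (a + c) * (b - c) by ring.
  by rewrite e subrr.
move/eqP; rewrite !mulf_eq0 (negbTE two_K) /= subr_eq0 (negbTE d3) orbF.
by move/eqP.
Qed.

Lemma sd_f1 : f 1 = 1.
Proof.
have [d1 h1] := sd (oner_neq0 F).
rewrite addr0 subr0 divff ?oner_neq0 // in h1.
move: h1 d1; rewrite sd_f0 addr0 subr0 => h1 d1.
by rewrite h1 divff.
Qed.

Lemma sd_fN x : f (- x) = - f x.
Proof.
have [->|x0] := eqVneq x 0; first by rewrite oppr0 sd_f0 oppr0.
have nx : x != - x.
  apply: contra x0 => /eqP e.
  have : 2%:R * x = 0 by rewrite mulr2n mulrDl mul1r {1}e addNr.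
  by move/eqP; rewrite mulf_eq0 (negbTE two_F).
have [d h] := sd nx.
rewrite subrr mul0r sd_f0 in h.
move/esym/eqP: h; rewrite mulf_eq0 invr_eq0 subr_eq0 (negbTE d) orbF addr_eq0.
by move/eqP ->; rewrite opprK.
Qed.

Lemma Tinj (a b : K) : a != 1 -> b != 1 -> (a + 1) / (a - 1) = (b + 1) / (b - 1) -> a = b.
Proof.
move=> a1 b1 /eqP; rewrite eqr_div ?subr_eq0 // => /eqP e.
have : 2%:R * (b - a) = 0.
  have -> : 2%:R * (b - a) = (a + 1) * (b - 1) - (b + 1) * (a - 1) by ring.
  by rewrite e subrr.
by move/eqP; rewrite mulf_eq0 (negbTE two_K) subr_eq0 => /eqP.
Qed.

Lemma sd_fT x : x != 1 -> f ((x + 1) / (x - 1)) = (f x + 1) / (f x - 1).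
Proof. by move=> x1; have [_ h] := sd x1; rewrite sd_f1 in h. Qed.

Lemma sd_fnz x : x != 0 -> f x != 0.
Proof. by move=> x0; rewrite -sd_f0; apply: sd_neq. Qed.

Lemma sd_fdiv x y : f (x / y) = f x / f y.
Proof.
have [->|y0] := eqVneq y 0; first by rewrite invr0 mulr0 sd_f0 invr0 mulr0.
have [->|xy] := eqVneq x y; first by rewrite !divff ?sd_f1 // sd_fnz.
have fy0 := sd_fnz y0.
have [d h] := sd xy.
have xy1 : x / y != 1.
  by apply: contra xy => /eqP e; apply/eqP; rewrite -(divfK y0 x) e mul1r.
have e1 : (x + y) / (x - y) = (x / y + 1) / (x / y - 1).
  by field; rewrite y0 mulN1r subr_eq0 xy.
have e2 : (f x + f y) / (f x - f y) = (f x / f y + 1) / (f x / f y - 1).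
  by field; rewrite fy0 mulN1r subr_eq0 d.
apply: Tinj.
- by rewrite -sd_f1; apply: sd_neq.
- apply: contra d => /eqP e; apply/eqP; by rewrite -(divfK fy0 (f x)) e mul1r.
- by rewrite -sd_fT // -e1 h e2.
Qed.

Lemma sd_finv x : f (x^-1) = (f x)^-1.
Proof. by rewrite -[x^-1]div1r sd_fdiv sd_f1 div1r. Qed.

Lemma sd_fM x y : f (x * y) = f x * f y.
Proof. by have := sd_fdiv x (y^-1); rewrite invrK sd_finv invrK. Qed.

Lemma sd_star x : f (x + 1) * (f x - 1) = f (x - 1) * (f x + 1).
Proof.
have [->|x1] := eqVneq x 1; first by rewrite subrr sd_f0 sd_f1 subrr mulr0 mul0r.
have := sd_fT x1; rewrite sd_fdiv => /eqP.
rewrite eqr_div ?sd_fnz ?subr_eq0 //; last first.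
  by rewrite -sd_f1; apply: sd_neq.
by move/eqP ->; rewrite mulrC.
Qed.

End SDprops.
Section FpMorph.
Variables (p : nat) (R : nzRingType).
Hypothesis pR : p \in [pchar R].

Let p_pr : prime p := GRing.pcharf_prime pR.

Definition Fp_to of p \in [pchar R] := fun (a : 'F_p) => (a : nat)%:R : R.
Local Notation fpt := (Fp_to pR).

Lemma Fp_val_add (a b : 'F_p) : val (a + b) = ((val a + val b) %% p)%N.
Proof. by rewrite -val_Fp_nat // natrD !natr_Zp. Qed.

Lemma Fp_val_mul (a b : 'F_p) : val (a * b) = ((val a * val b) %% p)%N.
Proof. by rewrite -val_Fp_nat // natrM !natr_Zp. Qed.

Lemma fpt_add a b : fpt (a + b) = fpt a + fpt b.
Proof. by rewrite /Fp_to Fp_val_add GRing.natr_mod_pchar // natrD. Qed.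

Lemma fpt_zmod : zmod_morphism fpt.
Proof.
move=> a b; apply: (addIr (fpt b)).
by rewrite -fpt_add subrK addrNK.
Qed.

Lemma fpt_mon : monoid_morphism fpt.
Proof.
split.
  have h : val (1 : 'F_p) = 1%N.
    by have := val_Fp_nat p_pr 1; rewrite modn_small ?prime_gt1.
  by rewrite /Fp_to h.
by move=> a b; rewrite /Fp_to Fp_val_mul GRing.natr_mod_pchar // natrM.
Qed.

HB.instance Definition _ := GRing.isZmodMorphism.Build _ _ fpt fpt_zmod.
HB.instance Definition _ := GRing.isMonoidMorphism.Build _ _ fpt fpt_mon.

End FpMorph.

Lemma unit_powF (F : finFieldType) (x : F) : x != 0 -> x ^+ #|F|.-1 = 1.
Proof.
move=> nz; have := expf_card x.
have q0 : (0 < #|F|)%N by apply/card_gt0P; exists x.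
rewrite -{1}(prednK q0) exprS => h.
by apply: (mulfI nz); rewrite mulr1 h.
Qed.

Lemma exists_gen (F : finFieldType) : exists g : F, (#|F|.-1).-primitive_root g.
Proof.
have q1 : (0 < #|F|.-1)%N.
  by rewrite -(cardC1 (0 : F)); apply/card_gt0P; exists 1; rewrite !inE oner_neq0.
have := @has_prim_root F #|F|.-1 (enum (predC1 0)) q1.
rewrite enum_uniq -cardE cardC1 leqnn.
have -> : all (#|F|.-1).-unity_root (enum (predC1 (0 : F))).
  by apply/allP => x; rewrite mem_enum inE unity_rootE => /unit_powF ->.
by move=> /(_ isT isT isT) /hasP [g _ pg]; exists g.
Qed.

Section Embed.
Variables (F : finFieldType) (K : fieldType) (p : nat).
Hypotheses (pF : p \in [pchar F]) (pK : p \in [pchar K]).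
Variable e : F -> K.
Hypotheses (e_inj : injective e) (e_root : forall x, e x ^+ #|F| = e x).

Local Notation iF := (Fp_to pF).
Local Notation iK := (Fp_to pK).

Definition gam : F := xchoose (exists_gen F).
Lemma gamP : (#|F|.-1).-primitive_root gam.
Proof. exact: (xchooseP (exists_gen F)). Qed.

Definition Pm (v : 'rV['F_p]_#|F|) := (rVpoly v != 0) && root (map_poly iF (rVpoly v)) gam.
Definition v0 : 'rV['F_p]_#|F| := poly_rV ('X^(#|F|.-1) - 1).

Lemma q_gt1 : (1 < #|F|)%N.
Proof. by rewrite (cardD1 (0 : F)) (cardD1 (1 : F)) !inE oner_neq0. Qed.

Lemma Pv0 : Pm v0.
Proof.
have sz : size ('X^(#|F|.-1) - 1 : {poly 'F_p}) = #|F|.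
  rewrite -polyC1 size_XnsubC ?prednK //; first exact: ltnW q_gt1.
  by rewrite -ltnS prednK ?q_gt1 // ltnW ?q_gt1.
rewrite /Pm /v0 poly_rV_K ?sz //; apply/andP; split.
  by rewrite -size_poly_eq0 sz -lt0n (ltnW q_gt1).
rewrite rmorphB /= map_polyXn rmorph1 rootE !hornerE.
by rewrite (prim_expr_order gamP) subrr.
Qed.

Definition mpol : {poly 'F_p} :=
  rVpoly [arg min_(v < v0 | Pm v) size (rVpoly v)].

Lemma mpolP : [/\ mpol != 0, root (map_poly iF mpol) gam &
  forall v, Pm v -> (size mpol <= size (rVpoly v))%N].
Proof.
rewrite /mpol; case: arg_minnP; first exact: Pv0.
by move=> v /andP[nz r] min; split.
Qed.


Lemma size_mpol_le : (size mpol <= #|F|)%N.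
Proof.
case: mpolP => _ _ min; apply: leq_trans (min _ Pv0) _.
by rewrite /rVpoly size_poly.
Qed.

Lemma mpol_dvd P : root (map_poly iF P) gam -> mpol %| P.
Proof.
move=> rP; case: mpolP => nz rm min.
apply/modp_eq0P; apply/eqP; apply: contraT => nzR.
have szR : (size (P %% mpol)%R < size mpol)%N := ltn_modpN0 _ nz.
have eR : (P %% mpol)%R = P - (P %/ mpol)%R * mpol.
  by apply/eqP; rewrite eq_sym subr_eq addrC -divp_eq.
have rR : root (map_poly iF (P %% mpol)) gam.
  rewrite eR rmorphB rmorphM /= rootE hornerD hornerN hornerM.
  by rewrite (rootP rP) (rootP rm) mulr0 subrr.
have PR : Pm (poly_rV (P %% mpol) : 'rV_#|F|).
  rewrite /Pm poly_rV_K ?nzR ?rR //.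
  by apply: leq_trans (ltnW szR) size_mpol_le.
have := min _ PR; rewrite poly_rV_K; last by apply: leq_trans (ltnW szR) size_mpol_le.
by rewrite leqNgt szR.
Qed.

Lemma mpol_size : (1 < size mpol)%N.
Proof.
case: mpolP => nz rm _; rewrite ltnNge; apply/negP => h.
move: rm; rewrite (size1_polyC h) map_polyC rootE hornerC fmorph_eq0 => c0.
by move: nz; rewrite (size1_polyC h) (eqP c0) eqxx.
Qed.

Lemma rho_ex : exists x : F, root (map_poly iK mpol) (e x).
Proof.
pose Xq : {poly 'F_p} := 'X^#|F| - 'X.
have dv : mpol %| Xq.
  apply: mpol_dvd; rewrite /Xq rmorphB /= map_polyXn map_polyX rootE !hornerE.
  by rewrite expf_card subrr.
have szX (R : nzRingType) : size ('X^#|F| - 'X : {poly R}) = #|F|.+1.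
  rewrite size_polyDl ?size_polyXn // size_polyN size_polyX ltnS.
  exact: q_gt1.
have dvK : map_poly iK mpol %| 'X^#|F| - 'X.
  by rewrite -(dvdp_map iK) in dv; move: dv; rewrite /Xq rmorphB /= map_polyXn map_polyX.
pose r := map e (enum F).
have [Q eQ] : exists Q, 'X^#|F| - 'X = Q * \prod_(z <- r) ('X - z%:P).
  apply: uniq_roots_prod_XsubC; last by rewrite uniq_rootsE map_inj_uniq ?enum_uniq.
  apply/allP => z /mapP [x _ ->]; rewrite rootE !hornerE e_root subrr //.
have szP : size (\prod_(z <- r) ('X - z%:P)) = #|F|.+1.
  by rewrite (size_prod_XsubC _ id) size_map -cardE.
have Qnz : Q != 0.
  by apply/eqP => Q0; move: (szX K); rewrite eQ Q0 mul0r size_poly0.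
have szQ : size Q = 1%N.
  have := szX K; rewrite eQ size_Mmonic ?monic_prod_XsubC // szP addnS /=.
  move: (size Q) => n; lia.
have [c c0 Qc] := size_poly1P _ (introT eqP szQ).
move: dvK; rewrite eQ Qc mul_polyC dvdpZr // => /dvdp_prod_XsubC [m em].
move: em; case es : (mask m r) => [|z s] em.
  have := eqp_size em; rewrite big_nil size_poly1 size_map_poly => h.
  by have := mpol_size; rewrite h.
have : root (map_poly iK mpol) z.
  by rewrite (eqp_root em) root_prod_XsubC mem_head.
have : z \in r by apply: (@mem_mask _ _ m); rewrite es mem_head.
by case/mapP => x _ -> rz; exists x.
Qed.

Definition rho : K := e (xchoose rho_ex).
Lemma rhoP : root (map_poly iK mpol) rho.
Proof. exact: (xchooseP rho_ex). Qed.

Lemma key P Q : (map_poly iF P).[gam] = (map_poly iF Q).[gam] ->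
  (map_poly iK P).[rho] = (map_poly iK Q).[rho].
Proof.
move=> e1; have : mpol %| P - Q.
  by apply: mpol_dvd; rewrite rmorphB /= rootE hornerD hornerN e1 subrr.
rewrite dvdp_eq => /eqP eq; apply/eqP; rewrite -subr_eq0.
by rewrite -hornerN -hornerD -rmorphB eq rmorphM /= hornerM (rootP rhoP) mulr0.
Qed.

Lemma rep_ex (x : F) : exists P : {poly 'F_p}, (map_poly iF P).[gam] == x.
Proof.
have [->|x0] := eqVneq x 0; first by exists 0; rewrite rmorph0 horner0.
have [i ->] := prim_rootP gamP (unit_powF x0).
by exists 'X^i; rewrite map_polyXn hornerXn.
Qed.

Definition rep x := xchoose (rep_ex x).
Lemma repP x : (map_poly iF (rep x)).[gam] = x.
Proof. exact/eqP/(xchooseP (rep_ex x)). Qed.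

Definition sigm x := (map_poly iK (rep x)).[rho].

Lemma sigm_eval P : sigm ((map_poly iF P).[gam]) = (map_poly iK P).[rho].
Proof. by apply: key; rewrite repP. Qed.

Lemma sigm_zmod : zmod_morphism sigm.
Proof.
move=> x y.
have -> : x - y = (map_poly iF (rep x - rep y)).[gam].
  by rewrite rmorphB /= hornerD hornerN !repP.
by rewrite sigm_eval rmorphB /= hornerD hornerN.
Qed.

Lemma sigm_mon : monoid_morphism sigm.
Proof.
split.
  have -> : (1 : F) = (map_poly iF 1).[gam] by rewrite rmorph1 hornerC.
  by rewrite sigm_eval rmorph1 hornerC.
move=> x y.
have -> : x * y = (map_poly iF (rep x * rep y)).[gam].
  by rewrite rmorphM /= hornerM !repP.
by rewrite sigm_eval rmorphM /= hornerM.
Qed.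

End Embed.

Lemma exists_embedding (F : finFieldType) (K : fieldType) (p : nat)
  (pF : p \in [pchar F]) (pK : p \in [pchar K]) (e : F -> K) :
  injective e -> (forall x, e x ^+ #|F| = e x) -> exists s : {rmorphism F -> K}, True.
Proof.
move=> ei er.
pose s : {rmorphism F -> K} := HB.pack (sigm pF pK ei er)
  (GRing.isZmodMorphism.Build _ _ _ (sigm_zmod pF pK ei er))
  (GRing.isMonoidMorphism.Build _ _ _ (sigm_mon pF pK ei er)).
by exists s.
Qed.

Lemma cube_SD (F : finFieldType) (K : fieldType) (g : {rmorphism F -> K}) :
  #|F| = 5%N -> (2%:R : F) != 0 -> SD_map (fun x => g x ^+ 3).
Proof.
move=> q5 two.
have inv3 (u : F) : u ^+ 3 = u^-1.
  have [->|u0] := eqVneq u 0; first by rewrite expr0n invr0.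
  have u4 := unit_powF u0; rewrite q5 /= in u4.
  apply: (mulfI u0); rewrite divff // -exprS; exact: u4.
move=> x y xy; rewrite -!rmorphXn; split.
  by rewrite (inj_eq (fmorph_inj g)) !inv3 (inj_eq (@invr_inj _)).
rewrite -rmorphD -rmorphB -fmorph_div; congr (g _).
rewrite !inv3 invf_div.
have xy0 : x - y != 0 by rewrite subr_eq0.
have [ex0|x0] := eqVneq x 0.
  have y0 : y != 0 by move: xy; rewrite ex0 eq_sym.
  by rewrite ex0 invr0 ?add0r ?sub0r; field; rewrite y0 oppr_eq0 oner_neq0.
have [->|y0] := eqVneq y 0.
  by rewrite invr0 ?addr0 ?subr0; field; rewrite x0 oner_neq0.
have [exy|nxy] := eqVneq (x + y) 0.
  move/eqP: exy; rewrite addr_eq0 => /eqP ->.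
  by rewrite addNr invr0 mulr0 invrN addNr mul0r.
have t4 : (x / y) ^+ 4 = 1 by have := unit_powF (mulf_neq0 x0 (invr_neq0 y0)); rewrite q5.
have t1 : x / y - 1 != 0.
  rewrite subr_eq0; apply: contra xy => /eqP e.
  by apply/eqP; rewrite -(divfK y0 x) e mul1r.
have t2 : x / y + 1 != 0.
  rewrite addr_eq0; apply: contra nxy => /eqP e.
  by rewrite -(divfK y0 x) e mulN1r addNr.
have ex : x ^+ 2 = - y ^+ 2.
  have : ((x / y) ^+ 2 - 1) * ((x / y) ^+ 2 + 1) = 0.
    have -> : ((x / y) ^+ 2 - 1) * ((x / y) ^+ 2 + 1) = (x / y) ^+ 4 - 1 by ring.
    by rewrite t4 subrr.
  move/eqP; rewrite mulf_eq0.
  have -> : (x / y) ^+ 2 - 1 = (x / y - 1) * (x / y + 1) by ring.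
  rewrite mulf_eq0 (negbTE t1) (negbTE t2) /= addr_eq0 => /eqP.
  rewrite expr_div_n => /(congr1 (fun z => z * y ^+ 2)).
  by rewrite divfK ?expf_neq0 // mulNr mul1r.
have -> : (x^-1 + y^-1) / (x^-1 - y^-1) = (x + y) / (y - x).
  by field; rewrite subr_eq0 eq_sym xy y0 x0.
have yx0 : y - x != 0 by rewrite subr_eq0 eq_sym.
apply/eqP; rewrite eqr_div // -subr_eq0.
have -> : (x - y) * (y - x) - (x + y) * (x + y) = - (2%:R * (x ^+ 2 + y ^+ 2)) by ring.
by rewrite ex addNr mulr0 oppr0.
Qed.

Theorem proposition3p2 (F : finFieldType) (K : fieldType) (p l : nat)
  (f : F -> K) :
  prime p -> (2 < p)%N -> p \in [pchar K] -> (1 <= l)%N -> #|F| = (p ^ l)%N ->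
  SD_map f ->
  ((exists g : {rmorphism F -> K}, forall x, f x = g x)
   \/ (#|F| = 5%N /\ exists g : {rmorphism F -> K}, forall x, f x = g x ^+ 3))
  /\ (#|F| = 5%N -> forall g : {rmorphism F -> K}, SD_map (fun x => g x ^+ 3)).
Proof.
move=> pp p2 pK l1 card sd.
have pF : p \in [pchar F] := card_finPcharP card pp.
have two_nz (R : nzRingType) : p \in [pchar R] -> (2%:R : R) != 0.
  move=> pR; rewrite -(dvdn_pcharf pR); apply/negP => /(dvdn_leq (isT : (0 < 2)%N)).
  by rewrite leqNgt p2.
have tF := two_nz F pF; have tK := two_nz K pK.
split; last by move=> q5 g; apply: cube_SD.
have oddq : odd #|F|.
  rewrite card oddX; case: (even_prime pp) => [e|->]; last by rewrite orbT.
  by move: p2; rewrite e.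
have f0 : f 0 = 0 := sd_f0 sd tF tK.
have f1 : f 1 = 1 := sd_f1 sd tF tK.
have fM := sd_fM sd tF tK.
have finj : injective f := sd_inj sd.
have fX (x : F) n : f (x ^+ n) = f x ^+ n.
  by elim: n => [|n IH]; rewrite ?expr0 ?f1 // !exprS fM IH.
have froot (x : F) : f x ^+ #|F| = f x by rewrite -fX expf_card.
have [s _] := exists_embedding pF pK finj froot.
have [g gP] := exists_gen F.
have sprim : (#|F|.-1).-primitive_root (s g) by rewrite fmorph_primitive_root.
have fg1 : f g ^+ #|F|.-1 = 1 by rewrite -fX (prim_expr_order gP) f1.
have [[k klt] /= ek] := prim_rootP sprim fg1.
have k0 : (0 < k)%N.
  rewrite lt0n; apply/negP => /eqP k0; rewrite k0 expr0 -f1 in ek.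
  have g1 := finj _ _ ek.
  have := eq_prim_root_expr gP 1 0; rewrite expr1 expr0 g1 eqxx.
  have q3 : (1 < #|F|.-1)%N.
    rewrite card; move: l1; case: (l) => // l' _; rewrite expnS.
    have : (3 <= p)%N by [].
    have : (1 <= p ^ l')%N by rewrite expn_gt0 prime_gt0.
    rewrite -subn1; move: (p ^ l')%N => a; nia.
  by rewrite !modn_small // ?(ltn_trans _ q3).
have fk (x : F) : f x = s (x ^+ k).
  have [->|x0] := eqVneq x 0.
    by rewrite f0 expr0n eqn0Ngt k0 /= rmorph0.
  have [i ->] := prim_rootP gP (unit_powF x0).
  by rewrite fX ek !rmorphXn -!exprM mulnC.
have kinj : injective (fun x : F => x ^+ k).
  by move=> x y /= e; apply: finj; rewrite !fk e.
have H (x : F) : (x + 1) ^+ k * (x ^+ k - 1) = (x - 1) ^+ k * (x ^+ k + 1).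
  apply: (fmorph_inj s); have := sd_star sd tF tK x; rewrite !fk.
  by rewrite !rmorphM !rmorphB !rmorphD !rmorph1 !rmorphXn.
case: (core tF oddq k0 klt kinj H) => [add | [q5 k3]]; last first.
  by right; split => //; exists s => x; rewrite fk k3 rmorphXn.
left.
have padd (x y : F) : (x + y) ^+ k = x ^+ k + y ^+ k.
  have [->|y0] := eqVneq y 0; first by rewrite addr0 expr0n eqn0Ngt k0 addr0.
  have -> : x + y = y * (x / y + 1) by field.
  by rewrite exprMn add mulrDr mulr1 -exprMn mulrC divfK.
have fz : zmod_morphism f.
  move=> x y; rewrite fk padd rmorphD -fk -fk.
  by rewrite (sd_fN sd tF tK).
have fm : monoid_morphism f by split => // x y; apply: fM.
pose gg : {rmorphism F -> K} := HB.pack f (GRing.isZmodMorphism.Build _ _ f fz)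
  (GRing.isMonoidMorphism.Build _ _ f fm).
by exists gg.
Qed.
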